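(* Let $d\ge1$ and let $G$ be the graphical 2-sum of two graphs $G_1$ and $G_2$ along an edge $e$. Suppose that $e$ is not a coloop in either $\mathcal{R}_d(G_1)$ or $\mathcal{R}_d(G_2)$. Then $G$ is a $k$-fold $\mathcal{R}_d$-circuit if and only if $G_1$ is a $k_1$-fold $\mathcal{R}_d$-circuit and $G_2$ is a $k_2$-fold $\mathcal{R}_d$-circuit with $k_1+k_2=k+1$.
   Context: For a graph $G=(V,E)$ and a generic $p:V\to\mathbb{R}^d$ (coordinates algebraically independent over $\mathbb{Q}$), the rigidity matrix has a row for each $uv\in E$ with $p(u)-p(v)$ in the $d$ columns of $u$, $p(v)-p(u)$ in those of $v$, zeros elsewhere; $\mathcal{R}_d(G)$ is its row matroid, with rank $r_d$. A coloop is an element in no circuit. For graphs $G_1,G_2$ with $G_1\cap G_2\cong K_2$ and $E(G_1)\cap E(G_2)=\{e\}$, their graphical 2-sum along $e$ is $(G_1\cup G_2)-e$. A set of edges is cyclic if it is a union of $\mathcal{R}_d$-circuits; a graph with edge set $D$ is a $k$-fold $\mathcal{R}_d$-circuit if $D$ is cyclic and $r_d(D)=|D|-k$. *)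

(* Defs.v *)
From HB Require Import structures.
From mathcomp Require Import all_boot all_order all_algebra.
From mathcomp Require Import reals.
From mathcomp Require Import mpoly.

Set Implicit Arguments.
Unset Strict Implicit.
Unset Printing Implicit Defensive.

Import Order.TTheory GRing.Theory Num.Theory.
Local Open Scope ring_scope.

(* Graphs are considered on a common finite vertex type [V]; an edge is a
   2-element vertex set [f : {set V}], and a graph is given by its vertex set
   [VS : {set V}] and its edge set [ES : {set {set V}}]. *)

Definition is_graph (V : finType) (VS : {set V}) (ES : {set {set V}}) : Prop :=
  forall f, f \in ES -> #|f| = 2%N /\ f \subset VS.

Section Rigidity.
Variables (R : realType) (V : finType) (d : nat).

Definition realisation := V -> 'rV[R]_d.

Definition coords (p : realisation) (i : 'I_#|{: V * 'I_d}|) : R :=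
  let vj := enum_val i in p vj.1 0 vj.2.

Definition generic (p : realisation) : Prop :=
  forall q : mpoly.mpoly #|{: V * 'I_d}| rat,
    q != 0 -> mpoly.mmap (ratr : rat -> R) (coords p) q != 0.

(* The row of the rigidity matrix for the edge f = uv: the block of vertex u
   is p(u) - p(v), that of v is p(v) - p(u), all other blocks are 0. *)
Definition rigrow (p : realisation) (f : {set V}) : {ffun V -> 'rV[R]_d} :=
  [ffun w => if w \in f then \sum_(x in f :\ w) (p w - p x) else 0].

Definition rank_d (p : realisation) (D : {set {set V}}) : nat :=
  \dim (span [seq rigrow p f | f <- enum D]).

Definition dependent (p : realisation) (D : {set {set V}}) : Prop :=
  (rank_d p D < #|D|)%N.

Definition circuit (p : realisation) (C : {set {set V}}) : Prop :=
  dependent p C /\ forall C' : {set {set V}}, C' \proper C -> ~ dependent p C'.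

Definition coloop (p : realisation) (E : {set {set V}}) (e : {set V}) : Prop :=
  ~ exists C, [/\ circuit p C, C \subset E & e \in C].

Definition cyclic (p : realisation) (D : {set {set V}}) : Prop :=
  forall f, f \in D -> exists C, [/\ circuit p C, C \subset D & f \in C].

Definition kfold_circuit (p : realisation) (D : {set {set V}}) (k : nat) : Prop :=
  cyclic p D /\ (rank_d p D + k)%N = #|D|.

End Rigidity.

(* Main.v *)
Require Import Defs.
From HB Require Import structures.
From mathcomp Require Import all_boot all_order all_algebra.
From mathcomp Require Import reals mpoly ring zify.
Set Implicit Arguments.
Unset Strict Implicit.
Unset Printing Implicit Defensive.
Import Order.TTheory GRing.Theory Num.Theory.
Local Open Scope ring_scope.

Lemma gen_ne (R : realType) (V : finType) (d : nat) (p : realisation R V d)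
  (hg : generic p) (u v : V) (i : 'I_d) : u != v -> p u 0 i != p v 0 i.
Proof.
move=> uv.
set a := enum_rank (u, i); set b := enum_rank (v, i).
have ab : a != b by apply/eqP => /enum_rank_inj [/eqP]; rewrite (negbTE uv).
have := hg ('X_a - 'X_b).
rewrite mmapB !mmapX !mmap1U /coords /a /b !enum_rankK /= => H.
rewrite -subr_eq0; apply: H.
apply/eqP => /(congr1 (mcoeff U_(a))); rewrite mcoeffB !mcoeffXU eqxx.
rewrite eq_sym (negbTE ab) mcoeff0 subr0 => /eqP; rewrite oner_eq0.
done.
Qed.


Section Span.
Variables (R : realType) (V : finType) (d : nat) (p : realisation R V d).
Local Notation F := {ffun V -> 'rV[R]_d}.
Local Notation row := (rigrow p).

Definition Sp (Y : {set {set V}}) : {vspace F} := (\sum_(f in Y) <[row f]>)%VS.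

Lemma rankE (Y : {set {set V}}) : rank_d p Y = \dim (Sp Y).
Proof. by rewrite /rank_d span_def big_map big_enum. Qed.

Lemma memS (Y : {set {set V}}) f : f \in Y -> row f \in Sp Y.
Proof. by move=> fY; rewrite memvE; apply: (sumv_sup f) => //. Qed.

Lemma subSP (Y : {set {set V}}) (W : {vspace F}) :
  reflect (forall f, f \in Y -> row f \in W) (Sp Y <= W)%VS.
Proof.
apply: (iffP subv_sumP) => H f fY; first by rewrite memvE; apply: H.
by rewrite -memvE; apply: H.
Qed.

Lemma S_mono (Y Z : {set {set V}}) : Y \subset Z -> (Sp Y <= Sp Z)%VS.
Proof. by move=> /subsetP YZ; apply/subSP => f /YZ; apply: memS. Qed.

Lemma SU (Y Z : {set {set V}}) : Sp (Y :|: Z) = (Sp Y + Sp Z)%VS.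
Proof.
apply: subv_anti; apply/andP; split.
  apply/subSP => f; rewrite inE => /orP[] fY.
    by apply: (subvP (addvSl _ _)); apply: memS.
  by apply: (subvP (addvSr _ _)); apply: memS.
by rewrite subv_add !S_mono // ?subsetUl ?subsetUr.
Qed.

Lemma S1 g : Sp [set g] = <[row g]>%VS.
Proof. by rewrite /Sp big_set1. Qed.

Lemma S1U g (Y : {set {set V}}) : Sp (g |: Y) = (<[row g]> + Sp Y)%VS.
Proof. by rewrite SU S1. Qed.

Lemma S_ind (P : F -> Prop) : P 0 -> (forall x y, P x -> P y -> P (x + y)) ->
  (forall (c : R) x, P x -> P (c *: x)) ->
  forall Y : {set {set V}}, (forall f, f \in Y -> P (row f)) -> forall w, w \in Sp Y -> P w.
Proof.
move=> P0 PD PZ Y PY w /memv_sumP [vs Hvs ->].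
apply: (big_ind P) => // f fY.
by have /vlineP [c ->] := Hvs f fY; apply/PZ/PY.
Qed.

Lemma r_le (Y : {set {set V}}) : (\dim (Sp Y) <= #|Y|)%N.
Proof. by rewrite -rankE /rank_d (leq_trans (dim_span _)) // size_map cardE. Qed.

Lemma r_same g (Y : {set {set V}}) : row g \in Sp Y -> Sp (g |: Y) = Sp Y.
Proof. by move=> gY; rewrite S1U; apply/addv_idPr; rewrite -memvE. Qed.

Lemma r_add g (Y : {set {set V}}) : row g \notin Sp Y -> \dim (Sp (g |: Y)) = (\dim (Sp Y)).+1.
Proof.
move=> gY; rewrite S1U; apply/eqP; rewrite eqn_leq; apply/andP; split.
  apply: (leq_trans (dimv_add_leqif _ _)); rewrite dim_vline addnC.
  by case: (_ != 0); rewrite ?addn0 ?addn1.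
rewrite ltnNge; apply/negP => H.
have: (Sp Y == <[row g]> + Sp Y)%VS by rewrite eqEdim addvSr H.
move/eqP => E; move: gY; rewrite E; apply/negP/negPn.
by apply: (subvP (addvSl _ _)); apply: memv_line.
Qed.

Lemma sub_indep (Z Y : {set {set V}}) : Z \subset Y -> \dim (Sp Y) = #|Y| -> \dim (Sp Z) = #|Z|.
Proof.
move=> ZY HY; apply/eqP; rewrite eqn_leq r_le /=.
have EY : Y = Z :|: (Y :\: Z).
  by apply/setP => x; rewrite !inE; case: (boolP (x \in Z)) => // /(subsetP ZY) ->.
have cY : #|Y| = (#|Z| + #|Y :\: Z|)%N by rewrite (cardsDS ZY) subnKC // subset_leq_card.
have : (#|Y| <= \dim (Sp Z) + #|Y :\: Z|)%N.
  rewrite -HY {1}EY SU (leq_trans (dimv_add_leqif _ _)) // leq_add2l. exact: r_le.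
by rewrite cY leq_add2r.
Qed.

Lemma indep_elem n (Y : {set {set V}}) : #|Y| = n ->
  (forall g, g \in Y -> row g \notin Sp (Y :\ g)) -> \dim (Sp Y) = #|Y|.
Proof.
elim: n Y => [|n IH] Y cY H.
  by move: cY => /eqP; rewrite cards_eq0 => /eqP ->; rewrite cards0 /Sp big_set0 dimv0.
have [g gY] : exists g, g \in Y.
  by apply/set0Pn; rewrite -card_gt0 cY.
have EY : Y = g |: (Y :\ g) by rewrite setD1K.
rewrite EY r_add; last by apply: H.
rewrite IH.
- by rewrite -EY (cardsD1 g Y) gY.
- by move: cY; rewrite (cardsD1 g Y) gY add1n => -[].
move=> h; rewrite inE => /andP [hg hY].
apply/negP => hin; move/negP: (H h hY); apply.
apply: (subvP (S_mono _)) hin.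
by apply/subsetP => x; rewrite !inE => /andP [-> /andP [_ ->]].
Qed.


Lemma dep_elem (Y : {set {set V}}) : (\dim (Sp Y) < #|Y|)%N ->
  exists2 g, g \in Y & row g \in Sp (Y :\ g).
Proof.
move=> lt; case: (boolP [exists g in Y, row g \in Sp (Y :\ g)]) => [/exists_inP[g gY gS]|Hn].
  by exists g.
exfalso; move: lt; rewrite (indep_elem (erefl _)) ?ltnn // => g gY.
by apply/negP => gS; move/negP: Hn; apply; apply/exists_inP; exists g.
Qed.

Lemma circuit_cl (C : {set {set V}}) f : circuit p C -> f \in C -> row f \in Sp (C :\ f).
Proof.
move=> [dep min] fC.
have hp : C :\ f \proper C by rewrite properD1.
have ind := min _ hp.
rewrite /dependent !rankE in dep ind.
move/negP: ind; rewrite -leqNgt => ind.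
have cC : #|C| = (#|C :\ f|).+1 by rewrite (cardsD1 f C) fC.
have sub : (Sp (C :\ f) <= Sp C)%VS by apply: S_mono; apply: subsetDl.
have E : Sp (C :\ f) = Sp C.
  apply/eqP; rewrite eqEdim sub /=.
  by apply: leq_trans ind; rewrite -ltnS -cC.
by rewrite E memS.
Qed.

Lemma cl_circuit_aux n : forall (Y : {set {set V}}) f, (#|Y| <= n)%N -> f \in Y ->
  row f \in Sp (Y :\ f) -> exists C, [/\ circuit p C, C \subset Y & f \in C].
Proof.
elim: n => [|n IH] Y f cY fY fS.
  by move: cY; rewrite leqn0 cards_eq0 => /eqP Y0; move: fY; rewrite Y0 inE.
case: (boolP [exists g in Y :\ f, row f \in Sp (Y :\ f :\ g)]) => [/exists_inP[g gYf gS]|Hn].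
  move: gYf; rewrite !inE => /andP [gf gY].
  have [|||C [Cc CY fC]] := IH (Y :\ g) f.
  - by move: cY; rewrite (cardsD1 g Y) gY add1n ltnS.
  - by rewrite !inE eq_sym gf fY.
  - by rewrite setDDl setUC -setDDl.
  by exists C; split => //; apply: (subset_trans CY); apply: subsetDl.
have MP : forall g, g \in Y :\ f -> row f \notin Sp (Y :\ f :\ g).
  move=> g gYf; apply/negP => gS; move/negP: Hn; apply; apply/exists_inP; by exists g.
have indf : \dim (Sp (Y :\ f)) = #|Y :\ f|.
  apply: (indep_elem (erefl _)) => g gYf; apply/negP => gS.
  have E : Sp (Y :\ f) = Sp (Y :\ f :\ g) by rewrite -{1}(setD1K gYf) r_same.
  by move/negP: (MP g gYf); apply; rewrite -E.
exists Y; split => //; split.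
  have E : Sp Y = Sp (Y :\ f) by rewrite -{1}(setD1K fY) r_same.
  by rewrite /dependent rankE E indf [X in (_ < X)%N](cardsD1 f) fY.
move=> C' /properP [C'Y [g gY gC']].
rewrite /dependent rankE; apply/negP; rewrite -leqNgt.
suff -> : \dim (Sp C') = #|C'| by [].
case: (boolP (f \in C')) => fC'.
  have gf : g != f by apply/eqP => gf; move: gC'; rewrite gf fC'.
  have gYf : g \in Y :\ f by rewrite !inE gf.
  apply: (sub_indep (Y := Y :\ g)).
    by apply/subsetP => x xC; rewrite !inE (subsetP C'Y) // andbT; apply/eqP => xg; move: gC'; rewrite -xg xC.
  have EY : Y :\ g = f |: (Y :\ f :\ g).
    apply/setP => x; rewrite !inE; case: (eqVneq x f) => [->|xf] /=; first by rewrite eq_sym gf fY.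
    by rewrite andbC.
  rewrite EY r_add; last by apply: MP.
  rewrite (sub_indep _ indf); last by apply: subsetDl.
  by rewrite cardsU1 !inE eqxx andbF.
apply: (sub_indep (Y := Y :\ f)) => //.
apply/subsetP => x xC; rewrite !inE (subsetP C'Y) // andbT.
by apply/eqP => xf; move: fC'; rewrite -xf xC.
Qed.

Lemma cyclicP (X : {set {set V}}) :
  cyclic p X <-> forall f, f \in X -> row f \in Sp (X :\ f).
Proof.
split => H f fX.
  have [C [Cc CX fC]] := H f fX.
  apply: (subvP (S_mono _)) (circuit_cl Cc fC).
  by apply: setSD.
exact: (cl_circuit_aux (leqnn _) fX (H f fX)).
Qed.

End Span.


Section Geo.
Variables (R : realType) (V : finType) (d : nat) (p : realisation R V d).
Local Notation F := {ffun V -> 'rV[R]_d}.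
Local Notation row := (rigrow p).

Lemma row_val a b x : a != b -> row [set a; b] x =
  if x == a then p a - p b else if x == b then p b - p a else 0.
Proof.
move=> ab; rewrite ffunE !inE.
case: (eqVneq x a) => [->|xa] /=.
  by rewrite setU1K ?big_set1 // inE.
case: (eqVneq x b) => [->|xb] //=.
by rewrite setUC setU1K ?big_set1 // inE eq_sym.
Qed.

Lemma sum2 (M : nmodType) (g : V -> M) a b : a != b ->
  (forall x, x != a -> x != b -> g x = 0) -> \sum_x g x = g a + g b.
Proof.
move=> ab H; rewrite (bigD1 a) //= (bigD1 b) /=; last by rewrite eq_sym.
by rewrite big1 ?addr0 // => x /andP [xb xa]; apply: H.
Qed.



Lemma edge2 (W : {set V}) (E : {set {set V}}) f : is_graph W E -> f \in E ->
  exists a b, [/\ a != b, f = [set a; b], a \in W & b \in W].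
Proof.
move=> gE fE; have [c2 sW] := gE f fE.
have /cards2P [a [b [ab fab]]] : #|f| == 2%N by rewrite c2.
exists a, b; split => //; apply: (subsetP sW); rewrite fab !inE eqxx ?orbT //.
Qed.

Lemma out_zero (W : {set V}) (E : {set {set V}}) : is_graph W E ->
  forall w, w \in Sp p E -> forall x, x \notin W -> w x = 0.
Proof.
move=> gE; apply: S_ind.
- by move=> x _; rewrite ffunE.
- by move=> y z Hy Hz x xW; rewrite ffunE Hy ?Hz ?addr0.
- by move=> c y Hy x xW; rewrite ffunE Hy ?scaler0.
move=> f fE x xW; have [c2 sW] := gE f fE.
rewrite ffunE; case: ifP => // xf.
by move: xW; rewrite (subsetP sW).
Qed.

Lemma trans_zero (W : {set V}) (E : {set {set V}}) : is_graph W E ->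
  forall w, w \in Sp p E -> \sum_x w x = 0.
Proof.
move=> gE; apply: S_ind.
- by apply: big1 => x _; rewrite ffunE.
- move=> y z Hy Hz; rewrite (eq_bigr (fun x => y x + z x)); last by move=> x _; rewrite ffunE.
  by rewrite big_split /= Hy Hz addr0.
- move=> c y Hy; rewrite (eq_bigr (fun x => c *: y x)); last by move=> x _; rewrite ffunE.
  by rewrite -scaler_sumr Hy scaler0.
move=> f fE; have [a [b [ab -> _ _]]] := edge2 gE fE.
rewrite (sum2 (a := a) (b := b)) //.
  by rewrite !row_val // eqxx eq_sym (negbTE ab) eqxx addrA subrK subrr.
by move=> x xa xb; rewrite row_val // (negbTE xa) (negbTE xb).
Qed.

Definition rot (i j : 'I_d) (w : F) : R := \sum_x (w x 0 i * p x 0 j - w x 0 j * p x 0 i).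

Lemma rot_zero (W : {set V}) (E : {set {set V}}) i j : is_graph W E ->
  forall w, w \in Sp p E -> rot i j w = 0.
Proof.
move=> gE; apply: S_ind.
- by apply: big1 => x _; rewrite ffunE !mxE !mul0r subrr.
- move=> y z Hy Hz; move: Hy Hz; rewrite /rot => Hy Hz.
  rewrite (eq_bigr (fun x => (y x 0 i * p x 0 j - y x 0 j * p x 0 i) + (z x 0 i * p x 0 j - z x 0 j * p x 0 i))).
    by rewrite big_split /= Hy Hz addr0.
  by move=> x _; rewrite ffunE !mxE; ring.
- move=> c y Hy; move: Hy; rewrite /rot => Hy.
  rewrite (eq_bigr (fun x => c * (y x 0 i * p x 0 j - y x 0 j * p x 0 i))).
    by rewrite -mulr_sumr Hy mulr0.
  by move=> x _; rewrite ffunE !mxE; ring.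
move=> f fE; have [a [b [ab -> _ _]]] := edge2 gE fE.
rewrite /rot (sum2 (a := a) (b := b)) //.
  rewrite !row_val // eqxx eq_sym (negbTE ab) eqxx !mxE; ring.
by move=> x xa xb; rewrite row_val // (negbTE xa) (negbTE xb) !mxE !mul0r subrr.
Qed.


Lemma inter_line (u v : V) (V1 V2 : {set V}) (E1 E2 : {set {set V}}) :
  (0 < d)%N -> u != v -> (forall i, p u 0 i != p v 0 i) ->
  is_graph V1 E1 -> is_graph V2 E2 -> V1 :&: V2 = [set u; v] ->
  (Sp p E1 :&: Sp p E2 <= <[row [set u; v]]>)%VS.
Proof.
move=> d0 uv hne g1 g2 V12; apply/subvP => w /memv_capP [w1 w2].
have z : forall x, x != u -> x != v -> w x = 0.
  move=> x xu xv; have : x \notin V1 :&: V2 by rewrite V12 !inE negb_or xu xv.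
  rewrite inE negb_and => /orP [] xV; [exact: out_zero g1 w w1 x xV | exact: out_zero g2 w w2 x xV].
have tr := trans_zero g1 w1; rewrite (sum2 uv z) in tr.
have wv : w v = - w u by apply/eqP; rewrite -addr_eq0 addrC tr.
set i0 : 'I_d := Ordinal d0.
have hd : p u 0 i0 - p v 0 i0 != 0 by rewrite subr_eq0.
set c := w u 0 i0 / (p u 0 i0 - p v 0 i0).
have key : forall j, w u 0 j = c * (p u 0 j - p v 0 j).
  move=> j; have H := rot_zero i0 j g1 w1.
  rewrite /rot (sum2 (a := u) (b := v)) // in H; last first.
    by move=> x xu xv; rewrite z // !mxE !mul0r subrr.
  rewrite wv !mxE in H.
  have k2 : w u 0 i0 * (p u 0 j - p v 0 j) = w u 0 j * (p u 0 i0 - p v 0 i0).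
    by apply/eqP; rewrite -subr_eq0; apply/eqP; rewrite -[RHS]H; ring.
  by rewrite /c mulrAC k2 mulfK.
apply/vlineP; exists c; apply/ffunP => x; rewrite ffunE row_val //.
case: (eqVneq x u) => [->|xu].
  by apply/rowP => j; rewrite !mxE key.
case: (eqVneq x v) => [->|xv].
  by apply/rowP => j; rewrite wv !mxE key; ring.
by rewrite z // scaler0.
Qed.

End Geo.


Section Main.
Variables (R : realType) (V : finType) (d : nat) (p : realisation R V d).
Local Notation row := (rigrow p).

Lemma dir1 (E1 E2 : {set {set V}}) e : e \in E1 ->
  (Sp p E1 :&: Sp p E2 <= <[row e]>)%VS -> row e \in Sp p (E1 :\ e) ->
  cyclic p ((E1 :|: E2) :\ e) -> cyclic p E1.
Proof.
move=> eE1 I a /cyclicP H; apply/cyclicP => f fE1.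
case: (eqVneq f e) => [->|fe] //.
have fD : f \in (E1 :|: E2) :\ e by rewrite !inE fe fE1.
have := H f fD.
have sub : (Sp p ((E1 :|: E2) :\ e :\ f) <= Sp p (E1 :\ e :\ f) + Sp p (E2 :\ e))%VS.
  apply/subSP => g; rewrite !inE => /andP [gf /andP [ge gE]].
  case: (boolP (g \in E1)) => gE1.
    by apply: (subvP (addvSl _ _)); apply: memS; rewrite !inE gf ge gE1.
  by apply: (subvP (addvSr _ _)); apply: memS; rewrite !inE ge; move: gE; rewrite (negbTE gE1).
move/(subvP sub) => /memv_addP [x xA [y yB Exy]].
have sA : (Sp p (E1 :\ e :\ f) <= Sp p E1)%VS.
  by apply: S_mono; apply/subsetP => g; rewrite !inE => /andP [_ /andP [_ ->]].
have sB : (Sp p (E2 :\ e) <= Sp p E2)%VS by apply: S_mono; apply: subsetDl.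
have xE : x \in Sp p (E1 :\ f).
  by apply: (subvP (S_mono _ _)) xA; apply/subsetP => g; rewrite !inE => /andP [-> /andP [_ ->]].
have yA : y \in Sp p E1.
  have -> : y = row f - x by rewrite Exy addrC addKr.
  by apply: memvB; [apply: memS | apply: (subvP sA)].
have ye : y \in <[row e]>%VS by apply: (subvP I); apply/memv_capP; split => //; apply: (subvP sB).
rewrite Exy; apply: memvD => //.
apply: (subvP _ _ ye); rewrite -memvE; apply: memS; by rewrite !inE eq_sym fe.
Qed.


Lemma dir2 (E1 E2 : {set {set V}}) e f : f \in E1 -> f != e -> f \notin E2 ->
  cyclic p E1 -> row e \in Sp p (E2 :\ e) -> row f \in Sp p (((E1 :|: E2) :\ e) :\ f).
Proof.
move=> fE1 fe fE2 /cyclicP H be.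
apply: (subvP _ _ (H f fE1)); apply/subSP => g; rewrite !inE => /andP [gf gE1].
case: (eqVneq g e) => [->|ge].
  apply: (subvP (S_mono _ _)) be; apply/subsetP => x; rewrite !inE => /andP [xe xE2].
  rewrite xe xE2 orbT /= andbT; apply/eqP => xf; move: fE2; rewrite -xf xE2.
  done.
by apply: memS; rewrite !inE gf ge gE1.
Qed.

End Main.

Theorem lemma3p4 (R : realType) (V : finType) (d : nat) (p : realisation R V d)
    (V1 V2 : {set V}) (E1 E2 : {set {set V}}) (e : {set V}) :
  (1 <= d)%N ->
  generic p ->
  is_graph V1 E1 -> is_graph V2 E2 ->
  (* G1 and G2 intersect in a copy of K2 whose edge is e *)
  #|e| = 2%N -> V1 :&: V2 = e -> E1 :&: E2 = [set e] ->
  ~ coloop p E1 e -> ~ coloop p E2 e ->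
  forall k : nat,
    kfold_circuit p ((E1 :|: E2) :\ e) k <->
    exists k1 k2 : nat,
      [/\ kfold_circuit p E1 k1, kfold_circuit p E2 k2 & (k1 + k2 = k + 1)%N].
Proof.
move=> d1 hg g1 g2 ce V12 E12 nc1 nc2 k.
have /cards2P [u [v [uv eE]]] : #|e| == 2%N by rewrite ce.
have hne : forall i, p u 0 i != p v 0 i by move=> i; apply: gen_ne.
have I : (Sp p E1 :&: Sp p E2 <= <[rigrow p e]>)%VS.
  by rewrite eE; apply: (inter_line d1 uv hne g1 g2); rewrite V12 eE.
have I' : (Sp p E2 :&: Sp p E1 <= <[rigrow p e]>)%VS by rewrite capvC.
have eE1 : e \in E1 by have := set11 e; rewrite -E12 inE => /andP [].
have eE2 : e \in E2 by have := set11 e; rewrite -E12 inE => /andP [].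
have ne0 : rigrow p e != 0.
  apply/eqP => /(congr1 (fun w : {ffun V -> 'rV[R]_d} => w u 0 (Ordinal d1))).
  rewrite eE row_val // eqxx !mxE ffunE mxE => /eqP; rewrite subr_eq0; apply/negP; exact: hne.
have a : rigrow p e \in Sp p (E1 :\ e).
  case: (boolP (rigrow p e \in Sp p (E1 :\ e))) => // H; exfalso; apply: nc1 => -[C [Cc CE eC]].
  by move/negP: H; apply; apply: (subvP (S_mono _ _)) (circuit_cl Cc eC); apply: setSD.
have b : rigrow p e \in Sp p (E2 :\ e).
  case: (boolP (rigrow p e \in Sp p (E2 :\ e))) => // H; exfalso; apply: nc2 => -[C [Cc CE eC]].
  by move/negP: H; apply; apply: (subvP (S_mono _ _)) (circuit_cl Cc eC); apply: setSD.
have SE1 : Sp p E1 = Sp p (E1 :\ e) by rewrite -{1}(setD1K eE1) r_same.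
have SE2 : Sp p E2 = Sp p (E2 :\ e) by rewrite -{1}(setD1K eE2) r_same.
have DU : (E1 :|: E2) :\ e = (E1 :\ e) :|: (E2 :\ e) by rewrite setDUl.
have cap : (Sp p (E1 :\ e) :&: Sp p (E2 :\ e))%VS = <[rigrow p e]>%VS.
  apply: subv_anti; apply/andP; split; first by rewrite -SE1 -SE2.
  by rewrite -memvE; apply/memv_capP.
have rD : (\dim (Sp p ((E1 :|: E2) :\ e)) + 1 = \dim (Sp p (E1 :\ e)) + \dim (Sp p (E2 :\ e)))%N.
  by rewrite DU SU -dimv_sum_cap cap dim_vline ne0.
have AB0 : (E1 :\ e) :&: (E2 :\ e) = set0.
  apply/setP => x; rewrite !inE; apply/negP => /and3P [/andP [xe xE1] _ xE2].
  have : x \in E1 :&: E2 by rewrite inE xE1 xE2.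
  by rewrite E12 inE (negbTE xe).
have cD : #|(E1 :|: E2) :\ e| = (#|E1 :\ e| + #|E2 :\ e|)%N.
  by rewrite DU; have := cardsUI (E1 :\ e) (E2 :\ e); rewrite AB0 cards0 addn0.
have c1 : #|E1| = (#|E1 :\ e| + 1)%N by rewrite (cardsD1 e E1) eE1 addnC.
have c2 : #|E2| = (#|E2 :\ e| + 1)%N by rewrite (cardsD1 e E2) eE2 addnC.
have l1 := r_le p (E1 :\ e); have l2 := r_le p (E2 :\ e).
have cyc : cyclic p ((E1 :|: E2) :\ e) <-> cyclic p E1 /\ cyclic p E2.
  split.
    move=> H; split; first exact: (dir1 eE1 I a H).
    by apply: (dir1 eE2 I' b); rewrite setUC.
  move=> [H1 H2]; apply/cyclicP => f; rewrite !inE => /andP [fe fE].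
  case: (boolP (f \in E1)) => fE1.
    have fE2 : f \notin E2.
      apply/negP => fE2; have : f \in E1 :&: E2 by rewrite inE fE1 fE2.
      by rewrite E12 inE (negbTE fe).
    exact: dir2.
  have fE2 : f \in E2 by move: fE; rewrite (negbTE fE1).
  by rewrite setUC; apply: dir2.
rewrite /kfold_circuit !rankE SE1 SE2 cyc.
split.
  move=> [[cy1 cy2] rk].
  exists (#|E1| - \dim (Sp p (E1 :\ e)))%N, (#|E2| - \dim (Sp p (E2 :\ e)))%N.
  split; [split => //; lia | split => //; lia | lia].
move=> [k1 [k2 [[cy1 rk1] [cy2 rk2] kk]]]; split => //; lia.
Qed.
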